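(* Let $E$ be a real Banach space and $F\subseteq E$ a closed subspace which is the range of a linear projection $P:E\to F$ with $\|P\|\le1$. Then: (i) $FBL[F]$ is isometrically order isomorphic to a closed sublattice of $FBL[E]$; (ii) $FBL[F]^*$ is isometrically order isomorphic to a $w^*$-closed band of $FBL[E]^*$.
   Context: For a real Banach space $E$ with dual $E^*$ and closed unit ball $B_E$, let $H[E]$ be the vector space of all positively homogeneous functions $f:E^*\to\mathbb R$ ($f(\lambda x^* )=\lambda f(x^* )$ for $\lambda>0$). For $f\in H[E]$ put $\|f\|_{FBL[E]}:=\sup\{\sum_{k=1}^n|f(x_k^* )| : n\in\mathbb N,\ x_1^*,\dots,x_n^*\in E^*,\ \sup_{x\in B_E}\sum_{k=1}^n|x_k^*(x)|\le 1\}$. $H_0[E]:=\{f\in H[E]:\|f\|_{FBL[E]}<\infty\}$ is a Banach lattice with this norm and pointwise order/operations. For $x\in E$ let $\delta_x(x^* )=x^*(x)$. $FBL[E]$ is the closed sublattice of $H_0[E]$ generated by $\{\delta_x:x\in E\}$; $FBL[F]$ is defined likewise for the Banach space $F$. *)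

(* Defs.v *)
From HB Require Import structures.
From mathcomp Require Import all_boot all_order all_algebra.
From mathcomp Require Import all_classical all_reals all_analysis.
Unset Printing Implicit Defensive.
Import Order.TTheory GRing.Theory Num.Theory.
Import numFieldNormedType.Exports.
Local Open Scope classical_set_scope.
Local Open Scope ring_scope.

Section FBL.
Context {R : realType}.
Variable E : normedModType R.

Definition is_dual_elt (x : E -> R) : Prop :=
  (forall (a : R) (u v : E), x (a *: u + v) = a * x u + x v) /\ continuous x.

Definition dualsp := {x : E -> R | is_dual_elt x}.

Definition pos_homog (f : dualsp -> R) : Prop :=
  forall (x y : dualsp) (l : R), 0 < l ->
    (forall e : E, sval y e = l * sval x e) -> f y = l * f x.

Definition fbl_adm (s : seq dualsp) : Prop :=
  forall e : E, `|e| <= 1 -> \sum_(x <- s) `|sval x e| <= 1.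

Definition fblnorm (f : dualsp -> R) : \bar R :=
  ereal_sup [set ((\sum_(x <- s) `|f x|)%:E) | s in fbl_adm].

Definition H0 : set (dualsp -> R) :=
  [set f | pos_homog f /\ (fblnorm f < +oo)%E].

Definition fbl_delta (e : E) : dualsp -> R := fun x => sval x e.

Definition is_closed_sublattice (S : set (dualsp -> R)) : Prop :=
  [/\ S `<=` H0,
      S (fun _ => 0),
      (forall (a : R) f g, S f -> S g -> S (fun x => a * f x + g x)),
      (forall f g, S f -> S g -> S (fun x => Num.max (f x) (g x)))
    & (forall f, H0 f ->
         (forall eps : R, 0 < eps ->
            exists2 g, S g & (fblnorm (fun x => (f x - g x)%R) < eps%:E)%E) ->
         S f)].

Definition FBL : set (dualsp -> R) :=
  [set f | forall S, is_closed_sublattice S ->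
                     (forall e : E, S (fbl_delta e)) -> S f].

(* ---- the dual Banach lattice FBL[E]^* ----
   functionals are represented by maps (dualsp -> R) -> R, only their values on
   FBL[E] matter (two of them are identified when they agree on FBL[E]). *)
Definition fbl_dual : set ((dualsp -> R) -> R) :=
  [set phi | (forall (a : R) f g, FBL f -> FBL g ->
                 phi (fun x => a * f x + g x) = a * phi f + phi g)
           /\ exists C : R, forall f, FBL f -> (`|phi f|%:E <= C%:E * fblnorm f)%E].

Definition dual_eqv (phi psi : (dualsp -> R) -> R) : Prop :=
  forall f, FBL f -> phi f = psi f.

Definition dual_norm (phi : (dualsp -> R) -> R) : \bar R :=
  ereal_sup [set (`|phi f|)%:E | f in [set f | FBL f /\ (fblnorm f <= 1)%E]].

Definition dual_le (phi psi : (dualsp -> R) -> R) : Prop :=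
  forall f, FBL f -> (forall x, 0 <= f x) -> phi f <= psi f.

(* Riesz–Kantorovich: |phi|(f) = sup { |phi g| : g in FBL[E], |g| <= f } for f >= 0 *)
Definition dual_abs (phi : (dualsp -> R) -> R) (f : dualsp -> R) : \bar R :=
  ereal_sup [set (`|phi g|)%:E | g in [set g | FBL g /\ forall x, `|g x| <= f x]].

Definition dual_abs_le (phi psi : (dualsp -> R) -> R) : Prop :=
  forall f, FBL f -> (forall x, 0 <= f x) -> (dual_abs phi f <= dual_abs psi f)%E.

Definition dual_lub (D : set ((dualsp -> R) -> R)) (phi : (dualsp -> R) -> R) : Prop :=
  [/\ fbl_dual phi,
      (forall psi, D psi -> dual_le psi phi)
    & (forall chi, fbl_dual chi -> (forall psi, D psi -> dual_le psi chi) -> dual_le phi chi)].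

Definition is_band (J : set ((dualsp -> R) -> R)) : Prop :=
  [/\ J `<=` fbl_dual,
      J (fun _ => 0),
      (forall (a : R) phi psi, J phi -> J psi -> J (fun f => a * phi f + psi f)),
      (forall phi psi, fbl_dual phi -> J psi -> dual_abs_le phi psi -> J phi)
    & (forall D phi, D `<=` J -> dual_lub D phi -> J phi)].

(* J is closed in FBL[E]^* for the weak* topology sigma(FBL[E]^*, FBL[E]) *)
Definition wstar_closed (J : set ((dualsp -> R) -> R)) : Prop :=
  forall phi, fbl_dual phi ->
    (forall (n : nat) (g : 'I_n -> dualsp -> R) (eps : R),
        (forall i, FBL (g i)) -> 0 < eps ->
        exists2 psi, J psi & forall i, `|psi (g i) - phi (g i)| < eps) ->
    J phi.

End FBL.

Arguments pos_homog {R E}.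
Arguments fbl_adm {R E}.
Arguments fblnorm {R E}.
Arguments is_closed_sublattice {R E}.
Arguments dual_eqv {R E}.
Arguments dual_norm {R E}.
Arguments dual_le {R E}.
Arguments dual_abs {R E}.
Arguments dual_abs_le {R E}.
Arguments dual_lub {R E}.
Arguments is_band {R E}.
Arguments wstar_closed {R E}.

Definition fbl_isometric_order_embedding {R : realType} (F E : normedModType R)
  (T : (dualsp F -> R) -> (dualsp E -> R)) : Prop :=
  [/\ (forall f, FBL F f -> FBL E (T f)),
      (forall (a : R) f g, FBL F f -> FBL F g ->
          T (fun x => a * f x + g x) = (fun y => a * T f y + T g y)),
      (forall f g, FBL F f -> FBL F g ->
          T (fun x => Num.max (f x) (g x)) = (fun y => Num.max (T f y) (T g y))),
      (forall f g, FBL F f -> FBL F g ->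
          ((forall x, f x <= g x) <-> (forall y, T f y <= T g y)))
    & (forall f, FBL F f -> fblnorm (T f) = fblnorm f)].

Definition dual_isometric_order_iso {R : realType} (F E : normedModType R)
  (S : ((dualsp F -> R) -> R) -> ((dualsp E -> R) -> R))
  (J : set ((dualsp E -> R) -> R)) : Prop :=
  (forall phi, fbl_dual F phi -> J (S phi)) /\
      (forall phi phi', fbl_dual F phi -> fbl_dual F phi' ->
          dual_eqv phi phi' -> dual_eqv (S phi) (S phi')) /\
      (forall (a : R) phi psi, fbl_dual F phi -> fbl_dual F psi ->
          dual_eqv (S (fun f => a * phi f + psi f)) (fun f => a * S phi f + S psi f)) /\
      (forall phi psi, fbl_dual F phi -> fbl_dual F psi ->
          dual_eqv (S phi) (S psi) -> dual_eqv phi psi) /\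
      (forall chi, J chi -> exists2 phi, fbl_dual F phi & dual_eqv (S phi) chi) /\
      (forall phi psi, fbl_dual F phi -> fbl_dual F psi ->
          (dual_le phi psi <-> dual_le (S phi) (S psi))) /\
    (forall phi, fbl_dual F phi -> dual_norm (S phi) = dual_norm phi).

(* Main.v *)
Require Import Defs.
From HB Require Import structures.
From mathcomp Require Import all_boot all_order all_algebra.
From mathcomp Require Import all_classical all_reals all_analysis.
From mathcomp Require Import ring lra.
Import Order.TTheory GRing.Theory Num.Theory.
Import numFieldNormedType.Exports.
Local Open Scope classical_set_scope.
Local Open Scope ring_scope.

Section Gen.
Context {R : realType}.
Variable A : normedModType R.
Implicit Types (f g : dualsp A -> R) (phi psi : (dualsp A -> R) -> R).

Lemma dual_eq (x y : dualsp A) : (forall a, sval x a = sval y a) -> x = y.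
Proof.
case: x y => [x hx] [y hy] /= h.
have exy : x = y by apply/funext.
subst y; congr exist; exact: Prop_irrelevance.
Qed.

Lemma dual0 (x : dualsp A) : sval x 0 = 0.
Proof.
have := (proj1 (svalP x)) (-1) 0 0.
by rewrite scaler0 addr0 mulN1r addNr.
Qed.

Lemma dualZ (x : dualsp A) c e : sval x (c *: e) = c * sval x e.
Proof.
have := (proj1 (svalP x)) c e 0.
by rewrite addr0 dual0 addr0.
Qed.

Lemma dual_bound (x : dualsp A) :
  exists2 c : R, 0 < c & forall e, `|e| <= 1 -> `|c * sval x e| <= 1.
Proof.
have hc := (proj2 (svalP x)) 0.
move/cvgrPdist_lt : hc => /(_ 1 ltr01).
rewrite dual0 => /nbhs_norm0P [d /= d0 hd].
exists (d / 2); first by rewrite divr_gt0.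
move=> e he.
rewrite -dualZ.
have : `|(d / 2) *: e| < d.
  rewrite normrZ gtr0_norm ?divr_gt0 //.
  have := normr_ge0 e; move: d0 he; nra.
move/hd => /=; rewrite sub0r normrN => h; exact: ltW.
Qed.

Definition dscale_fun (c : R) (x : dualsp A) : A -> R := fun e => c * sval x e.

Lemma dscale_proof c x : is_dual_elt A (dscale_fun c x).
Proof.
split.
  by move=> a u v; rewrite /dscale_fun (proj1 (svalP x)); ring.
move=> t; apply: continuousM; first exact: cst_continuous.
exact: (proj2 (svalP x)).
Qed.

Definition dscale c x : dualsp A := exist _ (dscale_fun c x) (dscale_proof c x).

Definition nb (f : dualsp A -> R) (c : R) :=
  forall s, fbl_adm s -> \sum_(x <- s) `|f x| <= c.

Lemma fblnorm_le f c : (fblnorm f <= c%:E)%E <-> nb f c.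
Proof.
split.
  move=> h s hs; rewrite -lee_fin; apply: le_trans h.
  by apply: ereal_sup_ubound; exists s.
by move=> h; apply: ge_ereal_sup => _ [s hs <-]; rewrite lee_fin; apply: h.
Qed.

Lemma adm_nil : fbl_adm ([::] : seq (dualsp A)).
Proof. by move=> e _; rewrite big_nil. Qed.

Lemma fblnorm_ge0 f : (0 <= fblnorm f)%E.
Proof.
apply: ereal_sup_ubound; exists [::]; first exact: adm_nil.
by rewrite big_nil.
Qed.

Lemma fblnorm_fin f : (fblnorm f < +oo)%E <-> exists c, nb f c.
Proof.
split.
  move=> h; move: (fblnorm_ge0 f) h (fblnorm_le f).
  case: (fblnorm f) => [r| |] // _ _ hle.
  by exists r; apply/hle.
move=> [c /fblnorm_le h]; apply: (le_lt_trans h); exact: ltry.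
Qed.

Lemma nb_le f c c' : nb f c -> c <= c' -> nb f c'.
Proof. by move=> h hc s hs; apply: le_trans (h s hs) hc. Qed.

Lemma nb_ge0 f c : nb f c -> 0 <= c.
Proof. by move=> h; have := h _ adm_nil; rewrite big_nil. Qed.

Lemma nb_lin a f g cf cg : nb f cf -> nb g cg ->
  nb (fun x => a * f x + g x) (`|a| * cf + cg).
Proof.
move=> hf hg s hs.
apply: (@le_trans _ _ (\sum_(x <- s) (`|a| * `|f x| + `|g x|))).
  by apply: ler_sum => x _; rewrite -normrM; apply: ler_normD.
rewrite big_split /= -mulr_sumr; apply: lerD; last exact: hg.
by apply: ler_wpM2l => //; apply: hf.
Qed.

Lemma nb_max f g cf cg : nb f cf -> nb g cg ->
  nb (fun x => Num.max (f x) (g x)) (cf + cg).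
Proof.
move=> hf hg s hs.
apply: (@le_trans _ _ (\sum_(x <- s) (`|f x| + `|g x|))).
  apply: ler_sum => x _.
  have := normr_ge0 (f x); have := normr_ge0 (g x).
  case: (leP (f x) (g x)) => _ h1 h2; lra.
by rewrite big_split /=; apply: lerD; [apply: hf | apply: hg].
Qed.

Lemma ph_lin a f g : pos_homog f -> pos_homog g ->
  pos_homog (fun x : dualsp A => a * f x + g x).
Proof.
move=> hf hg x y l l0 hy; rewrite (hf x y l l0 hy) (hg x y l l0 hy); ring.
Qed.

Lemma ph_max f g : pos_homog f -> pos_homog g ->
  pos_homog (fun x : dualsp A => Num.max (f x) (g x)).
Proof.
move=> hf hg x y l l0 hy; rewrite (hf x y l l0 hy) (hg x y l l0 hy).
by rewrite maxr_pMr // ltW.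
Qed.

Lemma H0E f : H0 A f <-> pos_homog f /\ exists c, nb f c.
Proof. by split => -[h1 h2]; split => //; apply/fblnorm_fin. Qed.

Lemma H0_delta e : H0 A (fbl_delta A e).
Proof.
apply/H0E; split; first by move=> x y l _ hy; exact: hy.
exists (`|e| + 1) => s hs.
have c0 : 0 < `|e| + 1 by rewrite ltr_wpDl.
set e' := (`|e| + 1)^-1 *: e.
have he : e = (`|e| + 1) *: e' by rewrite /e' scalerA mulfV ?gt_eqF // scale1r.
have he' : `|e'| <= 1.
  rewrite /e' normrZ gtr0_norm ?invr_gt0 //.
  rewrite ler_pdivrMl // mulr1; lra.
rewrite /fbl_delta.
rewrite (eq_bigr (fun x => (`|e| + 1) * `|sval x e'|)); last first.
  by move=> x _; rewrite {1}he dualZ normrM (gtr0_norm c0).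
rewrite -mulr_sumr -[X in _ <= X]mulr1.
by apply: ler_wpM2l; [exact: ltW | exact: hs].
Qed.

Lemma H0_closed : is_closed_sublattice (H0 A).
Proof.
split => //.
- apply/H0E; split; first by move=> *; rewrite mulr0.
  by exists 0 => s _; rewrite big1 // => x _; rewrite normr0.
- move=> a f g /H0E [pf [cf hf]] /H0E [pg [cg hg]]; apply/H0E; split.
    exact: ph_lin.
  by exists (`|a| * cf + cg); apply: nb_lin.
- move=> f g /H0E [pf [cf hf]] /H0E [pg [cg hg]]; apply/H0E; split.
    exact: ph_max.
  by exists (cf + cg); apply: nb_max.
Qed.

Lemma FBL_H0 f : FBL A f -> H0 A f.
Proof. by move=> h; apply: h; [exact: H0_closed | exact: H0_delta]. Qed.

Lemma FBL_0 : FBL A (fun _ => 0).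
Proof. by move=> S [] _ h0 _ _ _ _. Qed.

Lemma FBL_lin a f g : FBL A f -> FBL A g -> FBL A (fun x => a * f x + g x).
Proof. by move=> hf hg S hS hd; case: (hS) => _ _ hl _ _; apply: hl; [apply: hf|apply: hg]. Qed.

Lemma FBL_max f g : FBL A f -> FBL A g -> FBL A (fun x => Num.max (f x) (g x)).
Proof. by move=> hf hg S hS hd; case: (hS) => _ _ _ hm _; apply: hm; [apply: hf|apply: hg]. Qed.

Lemma FBL_delta e : FBL A (fbl_delta A e).
Proof. by move=> S _ hd. Qed.

Lemma FBL_closed f : H0 A f ->
  (forall eps : R, 0 < eps ->
     exists2 g, FBL A g & (fblnorm (fun x => (f x - g x)%R) < eps%:E)%E) ->
  FBL A f.
Proof.
move=> hf ha S hS hd; case: (hS) => _ _ _ _ hc; apply: hc => // eps e0.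
have [g hg hn] := ha eps e0; exists g => //; exact: hg.
Qed.

Lemma FBL_fin f : FBL A f -> exists2 r : R, 0 <= r & fblnorm f = r%:E.
Proof.
move=> /FBL_H0 [_]; move: (fblnorm_ge0 f); case: (fblnorm f) => [r| |] // h _.
by exists r.
Qed.

Lemma FBL_abs f : FBL A f -> FBL A (fun x => `|f x|).
Proof.
move=> hf.
have -> : (fun x => `|f x|) = (fun x => Num.max (f x) (-1 * f x + 0)).
  by apply: funext => x; rewrite mulN1r addr0 maxrN.
by apply: FBL_max => //; exact: (FBL_lin (-1) _ _ hf FBL_0).
Qed.

Lemma fd_intro phi :
  (forall (a : R) f g, FBL A f -> FBL A g ->
                 phi (fun x => a * f x + g x) = a * phi f + phi g) ->
  (exists C, forall f r, FBL A f -> fblnorm f = r%:E -> `|phi f| <= C * r) ->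
  fbl_dual A phi.
Proof.
move=> hl [C hC]; split => //; exists C => f hf.
have [r r0 hr] := FBL_fin _ hf; rewrite hr -EFinM lee_fin; exact: hC hr.
Qed.

Lemma fd_elim phi : fbl_dual A phi ->
  exists2 C, 0 <= C & forall f r, FBL A f -> fblnorm f = r%:E -> `|phi f| <= C * r.
Proof.
move=> [_ [C hC]]; exists (Num.max C 0); first by rewrite le_max lexx orbT.
move=> f r hf hr.
have := hC f hf; rewrite hr -EFinM lee_fin => h; apply: (le_trans h).
have [r' r0 hr'] := FBL_fin _ hf; move: hr; rewrite hr' => -[<-].
by apply: ler_wpM2r => //; rewrite le_max lexx.
Qed.

Lemma fd_lin0 phi : fbl_dual A phi -> phi (fun _ => 0) = 0.
Proof.
move=> [hl _]; have := hl (-1) _ _ (FBL_0) (FBL_0).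
have e0 : (fun x : dualsp A => (-1 : R) * 0 + 0) = (fun _ => 0 : R).
  by apply: funext => x; rewrite mulr0 addr0.
by rewrite /= e0 mulN1r addNr.
Qed.

Lemma fd_zero : fbl_dual A (fun _ => 0).
Proof.
apply: fd_intro; first by move=> *; rewrite mulr0 addr0.
by exists 0 => f r _ _; rewrite normr0 mul0r.
Qed.

Lemma fd_lin a phi psi : fbl_dual A phi -> fbl_dual A psi ->
  fbl_dual A (fun f => a * phi f + psi f).
Proof.
move=> hphi hpsi; have [C1 C10 h1] := fd_elim _ hphi; have [C2 C20 h2] := fd_elim _ hpsi.
apply: fd_intro.
  move=> b f g hf hg; rewrite (proj1 hphi) // (proj1 hpsi) //; ring.
exists (`|a| * C1 + C2) => f r hf hr.
apply: (le_trans (ler_normD _ _)); rewrite normrM mulrDl -mulrA.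
by apply: lerD; [apply: ler_wpM2l => //; exact: h1 | exact: h2].
Qed.

Lemma nb_zero k : pos_homog k -> (forall eps, 0 < eps -> nb k eps) ->
  forall x, k x = 0.
Proof.
move=> pk hk x; have [c c0 hc] := dual_bound x.
have adm1 : fbl_adm [:: dscale c x] by move=> e he; rewrite big_seq1; exact: hc.
have hy : k (dscale c x) = c * k x by apply: pk.
case: (eqVneq (k x) 0) => // hne; exfalso.
have m0 : 0 < `|c * k x| by rewrite normr_gt0 mulf_neq0 // gt_eqF.
have e0 : 0 < `|c * k x| / 2 by lra.
have := hk _ e0 _ adm1; rewrite big_seq1 hy; lra.
Qed.

End Gen.

Lemma max_decomp {R : realType} (t : R) :
  t = -1 * Num.max (-1 * t + 0) 0 + Num.max t 0.
Proof.
rewrite /Num.max; case: ifPn => h1; case: ifPn => h2; rewrite ?ltNge ?negbK in h1 h2; lra.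
Qed.


Section Lift.
Context {R : realType}.
Variables (A B : normedModType R) (L : A -> B).
Hypothesis Llin : forall (a : R) (u v : A), L (a *: u + v) = a *: L u + L v.
Hypothesis Lcon : forall u : A, `|L u| <= `|u|.

Lemma LB u v : L (u - v) = L u - L v.
Proof.
have := Llin (-1) v u; rewrite scaleN1r addrC => ->.
by rewrite scaleN1r addrC.
Qed.

Lemma L_cont : continuous L.
Proof.
move=> a; apply/cvgrPdist_lt => e e0.
near=> t.
rewrite -LB; apply: (le_lt_trans (Lcon _)).
near: t.
by apply: (@cvgr_dist_lt _ _ _ _ _ id); [exact: cvg_id|].
Unshelve. all: by end_near.
Qed.

Definition adj_fun (x : dualsp B) : A -> R := fun a => sval x (L a).

Lemma adj_proof x : is_dual_elt A (adj_fun x).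
Proof.
split.
  by move=> a u v; rewrite /adj_fun Llin (proj1 (svalP x)).
move=> t; apply: (continuous_comp (L_cont t)).
exact: (proj2 (svalP x)).
Qed.

Definition adj x : dualsp A := exist _ (adj_fun x) (adj_proof x).

Definition lft (g : dualsp A -> R) : dualsp B -> R := fun x => g (adj x).

Lemma adm_map s : fbl_adm s -> fbl_adm (map adj s).
Proof.
move=> hs a ha; rewrite big_map.
by apply: hs; apply: le_trans (Lcon a) ha.
Qed.

Lemma nb_lft g c : nb A g c -> nb B (lft g) c.
Proof.
move=> hg s hs; have := hg _ (adm_map _ hs).
by rewrite big_map.
Qed.

Lemma fblnorm_lft g : (fblnorm (lft g) <= fblnorm g)%E.
Proof.
apply: ereal_sup_le => _ [s hs <-]; exists (map adj s); first exact: adm_map.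
by rewrite big_map.
Qed.

Lemma ph_lft g : pos_homog g -> pos_homog (lft g).
Proof.
move=> hg x y l l0 hy; apply: hg => // a; exact: hy.
Qed.

Lemma H0_lft g : H0 A g -> H0 B (lft g).
Proof.
move=> /H0E [hp [c hc]]; apply/H0E; split; first exact: ph_lft.
by exists c; apply: nb_lft.
Qed.

Lemma FBL_lft g : FBL A g -> FBL B (lft g).
Proof.
move=> hg; suff : [set g | H0 A g /\ FBL B (lft g)] g by case.
apply: hg; last first.
  move=> e; split; first exact: H0_delta.
  exact: (FBL_delta B (L e)).
have [hs h0 hl hm hc] := H0_closed A.
split.
- by move=> f [].
- by split => //; exact: FBL_0.
- move=> a f h [hf1 hf2] [hh1 hh2]; split; first exact: hl.
  exact: (FBL_lin B a _ _ hf2 hh2).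
- move=> f h [hf1 hf2] [hh1 hh2]; split; first exact: hm.
  exact: (FBL_max B _ _ hf2 hh2).
- move=> f hf ha; split => //.
  apply: FBL_closed; first exact: H0_lft.
  move=> eps e0; have [h [_ hh] hn] := ha eps e0.
  exists (lft h) => //.
  exact: (le_lt_trans (fblnorm_lft (fun x => f x - h x)) hn).
Qed.

Lemma fd_comp phi : fbl_dual B phi -> fbl_dual A (fun g => phi (lft g)).
Proof.
move=> hphi; have [C C0 hC] := fd_elim B _ hphi.
apply: fd_intro.
  move=> a f g hf hg; rewrite -(proj1 hphi) //; exact: FBL_lft.
exists C => f r hf hr.
have hf' := FBL_lft _ hf.
have [r' r0 hr'] := FBL_fin B _ hf'.
apply: le_trans (hC _ _ hf' hr') _.
apply: ler_wpM2l => //.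
by have := fblnorm_lft f; rewrite hr hr' lee_fin.
Qed.

End Lift.

Theorem corollary2p7 (R : realType) (E F : completeNormedModType R)
  (iota : F -> E) (P : E -> F)
  (iota_lin : forall (a : R) (u v : F), iota (a *: u + v) = a *: iota u + iota v)
  (iota_isom : forall y : F, `|iota y| = `|y|)
  (P_lin : forall (a : R) (u v : E), P (a *: u + v) = a *: P u + P v)
  (P_proj : forall y : F, P (iota y) = y)
  (P_norm : forall x : E, `|P x| <= `|x|) :
  (exists T : (dualsp F -> R) -> (dualsp E -> R),
      fbl_isometric_order_embedding F E T /\
      (T @` FBL F `<=` FBL E /\ is_closed_sublattice (T @` FBL F)))
  /\
  (exists (J : set ((dualsp E -> R) -> R))
          (S : ((dualsp F -> R) -> R) -> ((dualsp E -> R) -> R)),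
      [/\ is_band J, wstar_closed J & dual_isometric_order_iso F E S J]).
Proof.
have iota_con : forall y : F, `|iota y| <= `|y| by move=> y; rewrite iota_isom.
pose adjI := @adj R F E iota iota_lin iota_con.
pose adjP := @adj R E F P P_lin P_norm.
pose T := @lft R F E iota iota_lin iota_con.
pose Ph := @lft R E F P P_lin P_norm.
have adjK : forall y : dualsp F, adjI (adjP y) = y.
  by move=> y; apply: dual_eq => a /=; rewrite /adj_fun P_proj.
have PT : forall f, Ph (T f) = f.
  by move=> f; apply: funext => y; rewrite /Ph /T /lft -/adjI -/adjP adjK.
have hFT : forall f, FBL F f -> FBL E (T f).
  by move=> f hf; exact: FBL_lft.
have hFP : forall g, FBL E g -> FBL F (Ph g).
  by move=> g hg; exact: FBL_lft.
split.
  exists T; split.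
    split.
    - exact: hFT.
    - by [].
    - by [].
    - move=> f g hf hg; split => h x; first exact: h.
      by have := h (adjP x); rewrite /T /lft -/adjI -/adjP adjK.
    - move=> f hf; apply: le_anti; apply/andP; split; first exact: fblnorm_lft.
      rewrite -[X in (fblnorm X <= _)%E](PT f); exact: fblnorm_lft.
  split.
    by move=> _ [f hf <-]; exact: hFT.
  split.
  - by move=> _ [f hf <-]; apply: FBL_H0; exact: hFT.
  - by exists (fun _ => 0); [exact: FBL_0|].
  - move=> a _ _ [f hf <-] [g hg <-]; exists (fun x => a * f x + g x) => //.
    exact: FBL_lin.
  - move=> _ _ [f hf <-] [g hg <-]; exists (fun x => Num.max (f x) (g x)) => //.
    exact: FBL_max.
  - move=> h hh ha; exists (Ph h).
      apply: FBL_closed; first exact: H0_lft.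
      move=> eps e0; have [_ [g hg <-] hn] := ha eps e0.
      exists g => //.
      have -> : (fun x => Ph h x - g x) = Ph (fun x => h x - T g x).
        by apply: funext => y; rewrite /Ph /T /lft -/adjI -/adjP adjK.
      exact: le_lt_trans (fblnorm_lft _ _ _ _ _ _) hn.
    apply: funext => x.
    pose k := fun x => -1 * T (Ph h) x + h x.
    have pk : pos_homog k.
      apply: ph_lin; last exact: (proj1 hh).
      by apply: ph_lft; apply: ph_lft; exact: (proj1 hh).
    have hk : forall eps, 0 < eps -> nb E k eps.
      move=> eps e0.
      have e2 : 0 < eps / 2 by lra.
      have [_ [g hg <-] hn] := ha _ e2.
      pose d := fun x => h x - T g x.
      have nd : nb E d (eps / 2) by apply/fblnorm_le; exact: ltW.
      have nd2 : nb E (T (Ph d)) (eps / 2) by apply: nb_lft; apply: nb_lft.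
      have -> : k = fun x => -1 * T (Ph d) x + d x.
        apply: funext => y; rewrite /k /d /T /Ph /lft -/adjI -/adjP adjK; ring.
      apply: nb_le; first exact: (nb_lin _ _ _ _ _ _ nd2 nd).
      rewrite normrN normr1; lra.
    have := nb_zero _ _ pk hk x; rewrite /k; lra.
pose J := fun chi : (dualsp E -> R) -> R => fbl_dual E chi /\
  forall k, FBL E k -> (forall y, k (adjP y) = 0) -> chi k = 0.
pose S := fun (phi : (dualsp F -> R) -> R) (g : dualsp E -> R) => phi (Ph g).
have Jfix : forall chi g, J chi -> FBL E g -> chi g = chi (T (Ph g)).
  move=> chi g [hd hk] hg; have hq := hFT _ (hFP _ hg).
  have := hk (fun x => -1 * T (Ph g) x + g x) (FBL_lin _ _ _ _ hq hg).
  rewrite (proj1 hd) // => h.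
  have : -1 * chi (T (Ph g)) + chi g = 0.
    apply: h => y; rewrite /T /Ph /lft -/adjI -/adjP adjK; ring.
  lra.
exists J, S; split.
- split.
  + by move=> chi [].
  + by split; [exact: fd_zero|].
  + move=> a phi psi [h1 k1] [h2 k2]; split; first exact: fd_lin.
    by move=> k hk hker; rewrite k1 // k2 // mulr0 addr0.
  + move=> phi psi hphi [hpsi kpsi] hle; split => // k hk hker.
    have ha := FBL_abs _ _ hk.
    have h3 := hle _ ha (fun x => @normr_ge0 _ R (k x)).
    have h1 : (dual_abs psi (fun x => `|k x|%R) <= 0)%E.
      apply: ge_ereal_sup => _ [g [hg hgk] <-].
      rewrite kpsi ?normr0 // => y.
      by have := hgk (adjP y); rewrite hker normr0 normr_le0 => /eqP.
    have h2 : ((`|phi k|%R)%:E <= dual_abs phi (fun x => `|k x|%R))%E.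
      by apply: ereal_sup_ubound; exists k.
    have := le_trans h2 (le_trans h3 h1).
    by rewrite lee_fin normr_le0 => /eqP.
  + move=> D phi hD [hphi hub hlub]; split => // k hk hker.
    pose chi1 := fun f => phi (T (Ph f)).
    have hchi1 : fbl_dual E chi1.
      exact: (fd_comp _ _ P P_lin P_norm _ (fd_comp _ _ iota iota_lin iota_con _ hphi)).
    have le1 : dual_le phi chi1.
      apply: hlub => // psi hpsi f hf f0.
      rewrite (Jfix _ _ (hD _ hpsi) hf).
      by apply: hub; [exact: hpsi | apply: hFT; exact: hFP | move=> x; exact: f0].
    have key : forall kp, FBL E kp -> (forall x, 0 <= kp x) ->
        (forall y, kp (adjP y) = 0) -> phi kp = 0.
      move=> kp hkp kp0 hkerp.
      have hz : T (Ph kp) = fun _ => 0.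
        by apply: funext => x; rewrite /T /Ph /lft -/adjI -/adjP hkerp.
      have up : phi kp <= 0.
        by have := le1 _ hkp kp0; rewrite /chi1 hz fd_lin0.
      have lo : 0 <= phi kp.
        case: (pselect (exists psi, D psi)) => [[psi0 hpsi0] | hnD].
          have := hub _ hpsi0 _ hkp kp0.
          by rewrite (proj2 (hD _ hpsi0)).
        have hchi2 := fd_lin _ 2 _ _ hphi (fd_lin _ (-1) _ _ hchi1 (fd_zero _)).
        have := hlub _ hchi2 (fun psi hpsi => False_ind _ (hnD (ex_intro _ psi hpsi))) _ hkp kp0.
        rewrite /= /chi1 hz fd_lin0 //; lra.
      apply: le_anti; rewrite up lo //.
    have hkp := FBL_max _ _ _ hk (FBL_0 _).
    have hkm := FBL_max _ _ _ (FBL_lin _ (-1) _ _ hk (FBL_0 _)) (FBL_0 _).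
    have ek : k = fun x => -1 * (fun x => Num.max (-1 * k x + 0) 0) x + (fun x => Num.max (k x) 0) x.
      by apply: funext => x; rewrite -max_decomp.
    rewrite {1}ek (proj1 hphi); [|exact: hkm|exact: hkp].
    rewrite !key //; first by rewrite mulr0 addr0.
    by move=> x; rewrite le_max lexx orbT.
    by move=> y; rewrite hker maxxx.
    by move=> x; rewrite le_max lexx orbT.
    by move=> y; rewrite hker mulr0 addr0 maxxx.
- move=> phi hphi happ; split => // k hk hker.
  have h : forall eps, 0 < eps -> `|phi k| < eps.
    move=> eps e0; have [psi [_ kpsi] hps] := happ 1 (fun _ => k) eps (fun _ => hk) e0.
    by have := hps ord0; rewrite kpsi // sub0r normrN.
  case: (eqVneq (phi k) 0) => // hne.
  have hp : 0 < `|phi k| by rewrite normr_gt0.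
  by have := h _ hp; rewrite ltxx.
- split.
    move=> phi hphi; split; first exact: (fd_comp _ _ P P_lin P_norm _ hphi).
    move=> k hk hker; rewrite /S.
    have -> : Ph k = fun _ => 0 by apply: funext => y; exact: hker.
    exact: fd_lin0.
  split.
    by move=> phi phi' _ _ he g hg; exact: he _ (hFP _ hg).
  split.
    by move=> a phi psi _ _ g hg.
  split.
    by move=> phi psi _ _ he f hf; have := he _ (hFT _ hf); rewrite /S PT.
  split.
    move=> chi hchi; exists (fun f => chi (T f)).
      exact: (fd_comp _ _ iota iota_lin iota_con _ (proj1 hchi)).
    by move=> g hg; rewrite /S; symmetry; exact: Jfix.
  split.
    move=> phi psi _ _; split.
      by move=> hle g hg g0; apply: hle; [exact: hFP | move=> y; exact: g0].
    by move=> hle f hf f0; have := hle _ (hFT _ hf) (fun x => f0 _); rewrite /S PT.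
  move=> phi hphi; rewrite /dual_norm; congr ereal_sup; apply/seteqP; split.
    move=> _ [g [hg hn] <-]; exists (Ph g) => //; split; first exact: hFP.
    exact: le_trans (fblnorm_lft _ _ _ _ _ _) hn.
  move=> _ [f [hf hn] <-]; exists (T f); last by rewrite /S PT.
  split; first exact: hFT.
  exact: le_trans (fblnorm_lft _ _ _ _ _ _) hn.
Qed.
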